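(* Let $m\ge 1$, $1\le B_1\le m$, $B_2\ge 1$, and for $i\in[m]$ let $g_i:\mathbb{R}^d\to\mathbb{R}^p$ be $C_g$-Lipschitz and accessed through a stochastic oracle $g_i(\cdot;\xi)$ satisfying, for all $\mathbf{x},\mathbf{y}$ and each fresh oracle sample $\xi$: $\mathbb{E}[g_i(\mathbf{x};\xi)]=g_i(\mathbf{x})$, $\mathbb{E}\|g_i(\mathbf{x};\xi)-g_i(\mathbf{x})\|^2\le\sigma^2/B_2$, $\mathbb{E}\|g_i(\mathbf{x};\xi)-g_i(\mathbf{y};\xi)\|^2\le C_g^2\|\mathbf{x}-\mathbf{y}\|^2$. Let $(\mathbf{w}_t)$ be a sequence in $\mathbb{R}^d$ with $\mathbf{w}_{t+1},\mathbf{w}_t$ determined before iteration $t+1$. At iteration $t+1$ a subset $\mathcal{B}_1^{t+1}\subseteq[m]$ of size $B_1$ is drawn uniformly at random and for $i\in\mathcal{B}_1^{t+1}$ a fresh sample $\xi_{t+1}^i$ is drawn, independently of the past, and $$\mathbf{u}_{t+1}^i=\begin{cases}(1-\beta_{t+1})\mathbf{u}_{t}^i+\beta_{t+1} g_i(\mathbf{w}_{t+1};\xi_{t+1}^i)+\gamma_{t+1}\big(g_i(\mathbf{w}_{t+1};\xi_{t+1}^i)-g_i(\mathbf{w}_{t};\xi_{t+1}^i)\big), & i\in\mathcal{B}_1^{t+1},\\ \mathbf{u}_{t}^i, & \text{otherwise},\end{cases}$$ with $\gamma_{t+1}=\frac{m-B_1}{B_1(1-\beta_{t+1})}+(1-\beta_{t+1})$.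 If $\beta_{t+1}\le\frac12$, then $$\mathbb{E}\|\mathbf{u}_{t+1}-\mathbf{u}_t\|^2\le\frac{2B_1\beta_{t+1}^2\sigma^2}{B_2}+\frac{4B_1\beta_{t+1}^2}{m}\mathbb{E}\|\mathbf{u}_t-g(\mathbf{w}_t)\|^2+\frac{9m^2C_g^2}{B_1}\mathbb{E}\|\mathbf{w}_{t+1}-\mathbf{w}_t\|^2,$$ where $\|\mathbf{u}_{t+1}-\mathbf{u}_t\|^2=\sum_i\|\mathbf{u}_{t+1}^i-\mathbf{u}_t^i\|^2$ and $\|\mathbf{u}_t-g(\mathbf{w}_t)\|^2=\sum_i\|\mathbf{u}_t^i-g_i(\mathbf{w}_t)\|^2$.
   Context: $\mathbf{u}_t=(\mathbf{u}_t^1,\dots,\mathbf{u}_t^m)$ with $\mathbf{u}_t^i\in\mathbb{R}^p$; $g(\mathbf{w})=(g_1(\mathbf{w}),\dots,g_m(\mathbf{w}))$. *)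

(* Defs.v *)
From HB Require Import structures.
From mathcomp Require Import all_boot all_order all_algebra.
From mathcomp Require Import all_classical all_reals all_analysis.
Set Implicit Arguments. Unset Strict Implicit. Unset Printing Implicit Defensive.
Import Order.TTheory GRing.Theory Num.Theory.
Local Open Scope ring_scope.

Definition sqnorm (R : realType) (n : nat) (v : 'rV[R]_n) : R :=
  \sum_(k < n) (v ord0 k) ^+ 2.

Definition enorm (R : realType) (n : nat) (v : 'rV[R]_n) : R :=
  Num.sqrt (sqnorm v).

Definition gamma_coef (R : realType) (m B1 : nat) (beta : R) : R :=
  ((m%:R - B1%:R) / (B1%:R * (1 - beta))) + (1 - beta).

Definition u_next (R : realType) (m dd p : nat) (Xi : Type)
  (g : 'I_m -> 'rV[R]_dd -> Xi -> 'rV[R]_p) (beta gamma : R)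
  (wt wt1 : 'rV[R]_dd) (uti : 'rV[R]_p) (S : {set 'I_m}) (i : 'I_m) (xi : Xi)
  : 'rV[R]_p :=
  if i \in S then
    (1 - beta) *: uti + beta *: g i wt1 xi + gamma *: (g i wt1 xi - g i wt xi)
  else uti.

(* Main.v *)
Require Import Defs.
From HB Require Import structures.
From mathcomp Require Import all_boot all_order all_algebra.
From mathcomp Require Import all_classical all_reals all_analysis.
From mathcomp Require Import ring lra measurable_realfun.
Import Order.TTheory GRing.Theory Num.Theory.
Local Open Scope ring_scope.
Local Open Scope classical_set_scope.

Local Close Scope classical_set_scope.
Lemma card_contain m B1 (i : 'I_m) : (1 <= B1)%N ->
  #|[set S : {set 'I_m} | (#|S| == B1) && (i \in S)]| = 'C(m.-1, B1.-1).
Proof.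
move=> hB.
have -> : [set S : {set 'I_m} | (#|S| == B1) && (i \in S)] =
   (fun T => i |: T) @: [set T : {set 'I_m} | T \subset [set~ i] & #|T| == B1.-1].
  apply/finset.setP => S; rewrite inE; apply/andP/finset.imsetP.
  - move=> [/eqP cS iS]; exists (S :\ i).
      rewrite inE; apply/andP; split.
        by apply/fintype.subsetP => x; rewrite !inE => /andP[].
      by move: cS; rewrite (finset.cardsD1 i S) iS => <-.
    by rewrite finset.setD1K.
  - move=> [T]; rewrite inE => /andP[sT /eqP cT] ->; split; last exact: finset.setU11.
    have iT : i \notin T by apply/negP => /(fintype.subsetP sT); rewrite !inE eqxx.
    by rewrite finset.cardsU1 iT cT add1n prednK.
rewrite finset.card_in_imset; last first.
  move=> T1 T2; rewrite !inE => /andP[s1 _] /andP[s2 _] e.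
  have i1 : i \notin T1 by apply/negP => /(fintype.subsetP s1); rewrite !inE eqxx.
  have i2 : i \notin T2 by apply/negP => /(fintype.subsetP s2); rewrite !inE eqxx.
  by rewrite -(finset.setU1K i1) -(finset.setU1K i2) e.
by rewrite binomial.cards_draws finset.cardsC1 card_ord.
Qed.

Lemma sum_subsets (R : realFieldType) m B1 (K : 'I_m -> R) : (1 <= B1)%N -> (B1 <= m)%N ->
  ('C(m, B1)%:R^-1) * \sum_(S : {set 'I_m} | #|S| == B1) \sum_(i < m) (i \in S)%:R * K i
  = B1%:R / m%:R * \sum_(i < m) K i.
Proof.
move=> h1 h2.
rewrite exchange_big /= mulr_sumr mulr_sumr; apply: eq_bigr => i _.
rewrite -mulr_suml.
have -> : \sum_(S : {set 'I_m} | #|S| == B1) ((i \in S)%:R : R) = ('C(m.-1, B1.-1))%:R.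
  have e S : ((i \in S)%:R : R) = if i \in S then 1 else 0 by case: (i \in S).
  under eq_bigr do rewrite e.
  rewrite -(@card_contain m B1 i h1) -big_mkcondr /=.
  rewrite -sumr_const; apply: eq_bigl => S; by rewrite inE.
rewrite mulrA; congr (_ * _).
have hm : (0 < m)%N by apply: leq_trans h2.
have hC : ('C(m, B1) > 0)%N by rewrite bin_gt0.
have key : (m * 'C(m.-1, B1.-1) = B1 * 'C(m, B1))%N.
  by rewrite mul_bin_diag prednK.
have keyR : (m%:R * ('C(m.-1, B1.-1))%:R = B1%:R * ('C(m, B1))%:R :> R).
  by rewrite -!natrM key.
have m0 : (m%:R : R) != 0 by rewrite pnatr_eq0 -lt0n.
have C0 : (('C(m, B1))%:R : R) != 0 by rewrite pnatr_eq0 -lt0n.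
apply: (mulfI m0); rewrite mulrA [m%:R * _]mulrC -mulrA keyR.
by rewrite mulrC -mulrA mulfV ?mulr1 // mulrC -mulrA mulVf ?mulr1.
Qed.

Local Open Scope classical_set_scope.

Section helpers.
Context d (T : measurableType d) (R : realType).

Lemma ge0_le_integral_nm (mu : {measure set T -> \bar R}) (f1 f2 : T -> \bar R) :
  (forall x, (0 <= f1 x)%E) -> (forall x, (f1 x <= f2 x)%E) ->
  (\int[mu]_x f1 x <= \int[mu]_x f2 x)%E.
Proof.
move=> f10 f12.
have f20 x : (0 <= f2 x)%E by exact: le_trans (f10 x) (f12 x).
rewrite !ge0_integralTE //.
apply: ge_ereal_sup => _ [h /= hf <-].
apply: ereal_sup_ubound => /=; exists h => //= x.
exact: le_trans (hf x) (f12 x).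
Qed.

Lemma measurable_sqnorm n (F : T -> 'rV[R]_n) :
  (forall k, measurable_fun setT (fun w => F w ord0 k)) ->
  measurable_fun setT (fun w => sqnorm (F w)).
Proof.
move=> mF; rewrite /sqnorm.
apply: measurable_sum => k.
exact: measurable_realfun.measurable_funX.
Qed.

Lemma measurable_compB n (F G : T -> 'rV[R]_n) :
  (forall k, measurable_fun setT (fun w => F w ord0 k)) ->
  (forall k, measurable_fun setT (fun w => G w ord0 k)) ->
  (forall k, measurable_fun setT (fun w => (F w - G w) ord0 k)).
Proof.
move=> mF mG k.
rewrite (_ : (fun w => (F w - G w) ord0 k) = (fun w => F w ord0 k) \- (fun w => G w ord0 k)).
  exact: measurable_realfun.measurable_funB.
by apply/funext => w; rewrite !mxE.
Qed.

Lemma sqnorm_ge0 n (v : 'rV[R]_n) : 0 <= sqnorm v.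
Proof. by rewrite /sqnorm; apply: sumr_ge0 => k _; exact: sqr_ge0. Qed.

End helpers.

Section L.
Context d (T : measurableType d) (R : realType) (mu : probability T R).

Lemma icst (r : R) : mu.-integrable setT (fun _ => r%:E).
Proof. exact: (finite_measure_integrable_cst mu r measurableT). Qed.

Lemma int_cstE (r : R) : (\int[mu]_x r%:E = r%:E)%E.
Proof.
have H := integral_cst mu measurableT r%:E.
transitivity (r%:E * mu setT)%E; first exact: H.
by rewrite probability_setT mule1.
Qed.

Lemma var_decomp (f : T -> R) (a c : R) :
  measurable_fun setT f ->
  (\int[mu]_x (f x)%:E = a%:E)%E ->
  (\int[mu]_x ((f x - a)^+2)%:E < +oo)%E ->
  (\int[mu]_x ((f x - a + c)^+2)%:E = \int[mu]_x ((f x - a)^+2)%:E + (c^+2)%:E)%E.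
Proof.
move=> mf intf sq.
set h := fun x => f x - a.
have mh : measurable_fun setT h.
  exact: measurable_realfun.measurable_funB mf (measurable_cst _).
have mh2 : measurable_fun setT (fun x => h x ^+ 2).
  exact: measurable_realfun.measurable_funX.
have ih2 : mu.-integrable setT (fun x => (h x ^+ 2)%:E).
  apply/integrableP; split; first exact/measurable_EFinP.
  under eq_integral do rewrite abse_EFin ger0_norm ?sqr_ge0//.
  exact: sq.
have ih : mu.-integrable setT (fun x => (h x)%:E).
  apply: (le_integrable measurableT _ _ (integrableD measurableT (icst 1) ih2)).
    exact/measurable_EFinP.
  move=> x _ /=; rewrite lee_fin.
  rewrite [X in _ <= X]ger0_norm; last by rewrite addr_ge0 ?sqr_ge0.
  have := sqr_ge0 (h x); have : 0 <= (`|h x| - 1) ^+ 2 by exact: sqr_ge0.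
  rewrite -(real_normK (num_real (h x))); nra.
have h0 : (\int[mu]_x (h x)%:E = 0)%E.
  have e : (\int[mu]_x (f x)%:E = \int[mu]_x ((h x)%:E + a%:E))%E.
    by apply: eq_integral => x _; rewrite -EFinD /h subrK.
  rewrite integralD// ?icst// int_cstE in e.
  move: e (integrable_fin_num measurableT ih); rewrite intf.
  case: (\int[mu]_x (h x)%:E)%E => //= r [e] _.
  by apply/eqP; rewrite eqe; apply/eqP; lra.
rewrite (_ : (fun x => ((f x - a + c) ^+ 2)%:E) =
   (fun x => ((h x ^+ 2)%:E + ((2 * c)%:E * (h x)%:E + (c ^+ 2)%:E)%E)%E)); last first.
  by apply/funext => x; rewrite /h -EFinM -!EFinD; congr EFin; ring.
rewrite integralD//; last first.
  by apply: integrableD => //; [exact: integrableZl|exact: icst].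
rewrite integralD//; last exact: icst.
  by rewrite integralZl// h0 mule0 add0e int_cstE.
exact: integrableZl.
Qed.

Lemma sqnorm_decomp n (G : T -> 'rV[R]_n) (gb u : 'rV[R]_n) (s : R) :
  (forall k, measurable_fun setT (fun x => G x ord0 k)) ->
  (forall k, (\int[mu]_x (G x ord0 k)%:E = (gb ord0 k)%:E)%E) ->
  (\int[mu]_x (sqnorm (G x - gb))%:E <= s%:E)%E ->
  (\int[mu]_x (sqnorm (G x - u))%:E <= (s + sqnorm (u - gb))%:E)%E.
Proof.
move=> mG iG sG.
have mk k : measurable_fun setT (fun x => (G x ord0 k - gb ord0 k) ^+ 2).
  apply: measurable_funX; exact: measurable_funB (mG k) (measurable_cst _).
have e1 : (\int[mu]_x (sqnorm (G x - gb))%:E =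
    \sum_(k < n) \int[mu]_x ((G x ord0 k - gb ord0 k) ^+ 2)%:E)%E.
  rewrite -ge0_integral_sum//; last first.
    by move=> k x _; rewrite lee_fin sqr_ge0.
    by move=> k; apply/measurable_EFinP.
  apply: eq_integral => x _; rewrite sumEFin /sqnorm; congr EFin.
  by apply: eq_bigr => k _; rewrite !mxE.
have e2 : (\int[mu]_x (sqnorm (G x - u))%:E =
    \sum_(k < n) \int[mu]_x ((G x ord0 k - gb ord0 k + (gb ord0 k - u ord0 k)) ^+ 2)%:E)%E.
  rewrite -ge0_integral_sum//; last first.
    by move=> k x _; rewrite lee_fin sqr_ge0.
    move=> k; apply/measurable_EFinP; apply: measurable_funX.
    apply: measurable_funD; first exact: measurable_funB (mG k) (measurable_cst _).
    exact: measurable_cst.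
  apply: eq_integral => x _; rewrite sumEFin /sqnorm; congr EFin.
  by apply: eq_bigr => k _; rewrite !mxE; congr (_ ^+ 2); ring.
rewrite e2.
have e3 k : (\int[mu]_x ((G x ord0 k - gb ord0 k + (gb ord0 k - u ord0 k)) ^+ 2)%:E
   = \int[mu]_x ((G x ord0 k - gb ord0 k) ^+ 2)%:E + ((gb ord0 k - u ord0 k) ^+ 2)%:E)%E.
  apply: var_decomp => //.
  apply: (le_lt_trans _ (le_lt_trans sG (ltry s))).
  apply: ge0_le_integral_nm => x; rewrite lee_fin ?sqr_ge0//.
  rewrite /sqnorm (bigD1 k)//= !mxE lerDl.
  by apply: sumr_ge0 => j _; exact: sqr_ge0.
under eq_bigr => k _ do rewrite e3.
rewrite big_split /= -e1 EFinD sumEFin leeD// lee_fin /sqnorm le_eqVlt; apply/orP; left; apply/eqP.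
  by apply: eq_bigr => k _; rewrite !mxE; ring.

Qed.

Lemma per_i n (G0 G1 : T -> 'rV[R]_n) (gb uu : 'rV[R]_n) (b gam s L : R) :
  (forall k, measurable_fun setT (fun x => G0 x ord0 k)) ->
  (forall k, measurable_fun setT (fun x => G1 x ord0 k)) ->
  (forall k, (\int[mu]_x (G0 x ord0 k)%:E = (gb ord0 k)%:E)%E) ->
  (\int[mu]_x (sqnorm (G0 x - gb))%:E <= s%:E)%E ->
  (\int[mu]_x (sqnorm (G1 x - G0 x))%:E <= L%:E)%E ->
  (\int[mu]_x (sqnorm ((1 - b) *: uu + b *: G1 x + gam *: (G1 x - G0 x) - uu))%:E
    <= (2 * b ^+ 2 * (s + sqnorm (uu - gb)) + 2 * (b + gam) ^+ 2 * L)%:E)%E.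
Proof.
move=> mG0 mG1 iG0 sG0 LG.
have mA : measurable_fun setT (fun x => sqnorm (G0 x - uu)).
  apply: measurable_sqnorm; apply: measurable_compB => // k; exact: measurable_cst.
have mB : measurable_fun setT (fun x => sqnorm (G1 x - G0 x)).
  by apply: measurable_sqnorm; apply: measurable_compB.
apply: (le_trans (@ge0_le_integral_nm _ _ _ mu _ (fun x =>
   ((2 * b ^+ 2) * sqnorm (G0 x - uu) + (2 * (b + gam) ^+ 2) * sqnorm (G1 x - G0 x))%:E) _ _)).
- by move=> x; rewrite lee_fin sqnorm_ge0.
- move=> x; rewrite lee_fin /sqnorm !mulr_sumr -big_split /=.
  apply: ler_sum => k _; rewrite !mxE.
  set X := G0 x ord0 k - uu ord0 k; set Y := G1 x ord0 k - G0 x ord0 k.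
  have -> : (1 - b) * uu ord0 k + b * G1 x ord0 k + gam * (G1 x ord0 k - G0 x ord0 k) - uu ord0 k
     = b * X + (b + gam) * Y by rewrite /X /Y; ring.
  have := sqr_ge0 (b * X - (b + gam) * Y); nra.
under eq_integral do rewrite EFinD !EFinM.
rewrite ge0_integralD//; first last.
- apply: measurable_funeM; exact/measurable_EFinP.
- by move=> x _; rewrite -EFinM lee_fin mulr_ge0 ?sqnorm_ge0// mulr_ge0 ?sqr_ge0.
- apply: measurable_funeM; exact/measurable_EFinP.
- by move=> x _; rewrite -EFinM lee_fin mulr_ge0 ?sqnorm_ge0// mulr_ge0 ?sqr_ge0.
rewrite !ge0_integralZl_EFin//; first last.
- by rewrite mulr_ge0 ?sqr_ge0.
- exact/measurable_EFinP.
- by move=> x _; rewrite lee_fin sqnorm_ge0.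
- by rewrite mulr_ge0 ?sqr_ge0.
- exact/measurable_EFinP.
- by move=> x _; rewrite lee_fin sqnorm_ge0.
rewrite EFinD !EFinM; apply: leeD; apply: lee_wpmul2l.
- by rewrite lee_fin mulr_ge0 // sqr_ge0.
- exact: sqnorm_decomp.
- by rewrite lee_fin mulr_ge0 // sqr_ge0.
- exact: LG.
Qed.
End L.

Theorem lemma6 (R : realType) (m B1 B2 dd p : nat)
  (dO : measure_display) (Omega : measurableType dO) (P : probability Omega R)
  (dX : measure_display) (Xi : measurableType dX) (mu : probability Xi R)
  (g : 'I_m -> 'rV[R]_dd -> Xi -> 'rV[R]_p) (gbar : 'I_m -> 'rV[R]_dd -> 'rV[R]_p)
  (Cg sigma beta : R)
  (wt wt1 : Omega -> 'rV[R]_dd) (ut : Omega -> 'I_m -> 'rV[R]_p) :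
  (1 <= m)%N -> (1 <= B1)%N -> (B1 <= m)%N -> (1 <= B2)%N ->
  0 <= Cg ->
  (* g_i is C_g-Lipschitz *)
  (forall i x y, enorm (gbar i x - gbar i y) <= Cg * enorm (x - y)) ->
  (* the stochastic oracle: measurability, unbiasedness, variance, mean-square Lipschitz *)
  (forall i x k, measurable_fun setT (fun xi => g i x xi ord0 k)) ->
  (forall i x k, (\int[mu]_xi (g i x xi ord0 k)%:E = (gbar i x ord0 k)%:E)%E) ->
  (forall i x, (\int[mu]_xi (sqnorm (g i x xi - gbar i x))%:E
                  <= (sigma ^+ 2 / B2%:R)%:E)%E) ->
  (forall i x y, (\int[mu]_xi (sqnorm (g i x xi - g i y xi))%:E
                  <= (Cg ^+ 2 * sqnorm (x - y))%:E)%E) ->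
  (* the past (u_t, w_t, w_{t+1}) consists of random variables *)
  (forall i k, measurable_fun setT (fun w => ut w i ord0 k)) ->
  (forall k, measurable_fun setT (fun w => wt w ord0 k)) ->
  (forall k, measurable_fun setT (fun w => wt1 w ord0 k)) ->
  (forall i k, measurable_fun setT (fun w => gbar i (wt w) ord0 k)) ->
  (forall i k, measurable_fun setT (fun z : Omega * Xi => g i (wt z.1) z.2 ord0 k)) ->
  (forall i k, measurable_fun setT (fun z : Omega * Xi => g i (wt1 z.1) z.2 ord0 k)) ->
  0 <= beta -> beta <= 1 / 2 ->
  let gamma := gamma_coef m B1 beta in
  (* E || u_{t+1} - u_t ||^2 : expectation over the past (P), the uniformly
     drawn B1-subset S of [m], and the independent fresh samples xi^i ~ mu *)
  (\int[P]_w ((('C(m, B1))%:R^-1)%:E *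
      \sum_(S : {set 'I_m} | #|S| == B1)
        \sum_(i < m)
          \int[mu]_xi (sqnorm (u_next g beta gamma (wt w) (wt1 w) (ut w i) S i xi
                               - ut w i))%:E)
   <= (2 * B1%:R * beta ^+ 2 * sigma ^+ 2 / B2%:R)%:E
      + (4 * B1%:R * beta ^+ 2 / m%:R)%:E *
          \int[P]_w (\sum_(i < m) sqnorm (ut w i - gbar i (wt w)))%:E
      + (9 * m%:R ^+ 2 * Cg ^+ 2 / B1%:R)%:E *
          \int[P]_w (sqnorm (wt1 w - wt w))%:E)%E.
Proof.
move=> hm hB1 hB1m hB2 hCg Lip mg unb var msq mut mwt mwt1 mgb _ _ hb0 hb1.
cbv zeta; set gamma := gamma_coef m B1 beta.
set C := ('C(m, B1))%:R : R.
pose U w := \sum_(i < m) sqnorm (ut w i - gbar i (wt w)).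
pose D w := sqnorm (wt1 w - wt w).
pose s := sigma ^+ 2 / B2%:R.
pose K w (i : 'I_m) := 2 * beta ^+ 2 * (s + sqnorm (ut w i - gbar i (wt w)))
                       + 2 * (beta + gamma) ^+ 2 * (Cg ^+ 2 * D w).
have hb1' : beta < 1 by lra.
have hB1R : (0 < B1%:R :> R) by rewrite ltr0n.
have hmR : (0 < m%:R :> R) by rewrite ltr0n.
have hmB : (B1%:R <= m%:R :> R) by rewrite ler_nat.
have gam_bound : 0 <= B1%:R * (beta + gamma) <= 2 * m%:R.
  rewrite /gamma /gamma_coef.
  have -> : B1%:R * (beta + ((m%:R - B1%:R) / (B1%:R * (1 - beta)) + (1 - beta)))
      = B1%:R + (m%:R - B1%:R) / (1 - beta).
    by field; apply/andP; split; apply/lt0r_neq0 => //; lra.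
  have h1b : 0 < 1 - beta by lra.
  have q0 : 0 <= (m%:R - B1%:R) / (1 - beta) by apply: divr_ge0; lra.
  have q1 : (m%:R - B1%:R) / (1 - beta) <= 2 * (m%:R - B1%:R).
    rewrite ler_pdivrMr //; nra.
  apply/andP; split; lra.
have step1 : forall w,
  ((('C(m, B1))%:R^-1)%:E *
      \sum_(S : {set 'I_m} | #|S| == B1)
        \sum_(i < m)
          \int[mu]_xi (sqnorm (u_next g beta gamma (wt w) (wt1 w) (ut w i) S i xi
                               - ut w i))%:E <=
   (C^-1 * \sum_(S : {set 'I_m} | #|S| == B1) \sum_(i < m) (i \in S)%:R * K w i)%:E)%E.
  move=> w; rewrite EFinM; apply: lee_wpmul2l.
    by rewrite lee_fin invr_ge0 ler0n.
  rewrite -sumEFin; apply: lee_sum => S _; rewrite -sumEFin; apply: lee_sum => i _.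
  rewrite /u_next; case: (i \in S).
  - rewrite mul1r /K.
    apply: per_i.
    + by move=> k; apply: mg.
    + by move=> k; apply: mg.
    + by move=> k; apply: unb.
    + exact: var.
    + exact: msq.
  - rewrite mul0r subrr.
    have -> : sqnorm (0 : 'rV[R]_p) = 0.
      by rewrite /sqnorm big1 // => k _; rewrite mxE expr0n.
    by rewrite integral0.
have step3 : forall w, C^-1 * \sum_(S : {set 'I_m} | #|S| == B1) \sum_(i < m) (i \in S)%:R * K w i
   <= 2 * B1%:R * beta ^+ 2 * sigma ^+ 2 / B2%:R + (4 * B1%:R * beta ^+ 2 / m%:R) * U w
      + (9 * m%:R ^+ 2 * Cg ^+ 2 / B1%:R) * D w.
  move=> w; rewrite /C sum_subsets //.
  have -> : \sum_(i < m) K w i = m%:R * (2 * beta ^+ 2 * s + 2 * (beta + gamma) ^+ 2 * (Cg ^+ 2 * D w))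
              + 2 * beta ^+ 2 * U w.
    have eK i : K w i = (2 * beta ^+ 2 * s + 2 * (beta + gamma) ^+ 2 * (Cg ^+ 2 * D w))
       + 2 * beta ^+ 2 * sqnorm (ut w i - gbar i (wt w)) by rewrite /K; ring.
    rewrite /U.
    under eq_bigr => i _ do rewrite eK.
    rewrite big_split /= sumr_const card_ord -mulr_sumr; congr (_ + _).
    by rewrite [RHS]mulr_natl.
  have U0 : 0 <= U w by apply: sumr_ge0 => i _; exact: sqnorm_ge0.
  have D0 : 0 <= D w by exact: sqnorm_ge0.
  have e1 : B1%:R / m%:R * (m%:R * (2 * beta ^+ 2 * s + 2 * (beta + gamma) ^+ 2 * (Cg ^+ 2 * D w))
              + 2 * beta ^+ 2 * U w) =
     2 * B1%:R * beta ^+ 2 * sigma ^+ 2 / B2%:R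
     + (2 * B1%:R * beta ^+ 2 / m%:R) * U w
     + ((2 * (B1%:R * (beta + gamma)) ^+ 2) * Cg ^+ 2 / B1%:R) * D w.
    rewrite /s; field; apply/and3P; split; apply/lt0r_neq0 => //.
    by rewrite ltr0n.
  rewrite e1; apply: lerD; first apply: lerD => //.
  - apply: ler_wpM2r => //; apply: ler_wpM2r; first by rewrite invr_ge0; lra.
    have := mulr_ge0 (ltW hB1R) (sqr_ge0 beta); nra.
  - apply: ler_wpM2r => //; apply: ler_wpM2r; first by rewrite invr_ge0; lra.
    apply: ler_wpM2r; first exact: sqr_ge0.
    move/andP: gam_bound => [g0 g1].
    have : (B1%:R * (beta + gamma)) ^+ 2 <= (2 * m%:R) ^+ 2.
      by rewrite ler_sqr ?nnegrE //; lra.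
    nra.
set A := 2 * B1%:R * beta ^+ 2 * sigma ^+ 2 / B2%:R.
set c1 := 4 * B1%:R * beta ^+ 2 / m%:R.
set c2 := 9 * m%:R ^+ 2 * Cg ^+ 2 / B1%:R.
have A0 : 0 <= A.
  by apply: divr_ge0; rewrite ?ler0n //; apply: mulr_ge0; rewrite ?sqr_ge0 //; apply: mulr_ge0; rewrite ?sqr_ge0 ?ler0n //; lra.
have c10 : 0 <= c1.
  by apply: divr_ge0; rewrite ?ler0n //; apply: mulr_ge0; rewrite ?sqr_ge0 //; apply: mulr_ge0; rewrite ?sqr_ge0 ?ler0n //; lra.
have c20 : 0 <= c2.
  by apply: divr_ge0; rewrite ?ler0n //; apply: mulr_ge0; rewrite ?sqr_ge0 //; apply: mulr_ge0; rewrite ?sqr_ge0 ?ler0n //; lra.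
have mU : measurable_fun setT U.
  apply: measurable_sum => i; apply: measurable_sqnorm; exact: measurable_compB.
have mD : measurable_fun setT D.
  by apply: measurable_sqnorm; apply: measurable_compB.
have U0 w : 0 <= U w by apply: sumr_ge0 => i _; exact: sqnorm_ge0.
have D0 w : 0 <= D w by exact: sqnorm_ge0.
apply: (le_trans (@ge0_le_integral_nm _ _ _ P _ (fun w => (A + c1 * U w + c2 * D w)%:E) _ _)).
- move=> w; apply: mule_ge0; first by rewrite lee_fin invr_ge0 ler0n.
  apply: sume_ge0 => S _; apply: sume_ge0 => i _; apply: integral_ge0 => x _.
  by rewrite lee_fin sqnorm_ge0.
- move=> w; apply: le_trans (step1 w) _; rewrite lee_fin; exact: step3.
rewrite (_ : (fun w => (A + c1 * U w + c2 * D w)%:E) =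
   (fun w => ((A + c1 * U w)%:E + (c2 * D w)%:E)%E)); last first.
  by apply/funext => w; rewrite EFinD.
rewrite ge0_integralD //; first last.
- by apply/measurable_EFinP; apply: measurable_funM => //; exact: measurable_cst.
- by move=> w _; rewrite lee_fin; apply: mulr_ge0.
- apply/measurable_EFinP; apply: measurable_funD; first exact: measurable_cst.
  by apply: measurable_funM => //; exact: measurable_cst.
- by move=> w _; rewrite lee_fin; apply: addr_ge0 => //; apply: mulr_ge0.
rewrite (_ : (fun w => (A + c1 * U w)%:E) = (fun w => (A%:E + (c1 * U w)%:E)%E)); last first.
  by apply/funext => w; rewrite EFinD.
rewrite ge0_integralD //; first last.
- by apply/measurable_EFinP; apply: measurable_funM => //; exact: measurable_cst.
- by move=> w _; rewrite lee_fin; apply: mulr_ge0.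
rewrite int_cstE.
under eq_integral do rewrite EFinM.
rewrite ge0_integralZl_EFin //; last first.
  by apply/measurable_EFinP.
  by move=> w _; rewrite lee_fin.
have eD : (\int[P]_x (c2 * D x)%:E = c2%:E * \int[P]_x (D x)%:E)%E.
  under eq_integral do rewrite EFinM.
  rewrite ge0_integralZl_EFin //.
    by move=> w _; rewrite lee_fin.
  by apply/measurable_EFinP.
by rewrite eD.
Qed.
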